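(* Let $n$ be a positive integer and let $f$ be an $n$-variable Boolean function. Let $g$ be an $n$-variable Boolean function achieving ${FAI}(f)$, i.e. $g\in{AN}^c(f)$, $g\neq 1$ and $\deg(g)+\deg(f\cdot g)={FAI}(f)$. Then $\deg(g)\le\left\lfloor\frac{{FAI}(f)}{2}\right\rfloor$ and $\deg(f\cdot g)\ge\left\lceil\frac{{FAI}(f)}{2}\right\rceil$.
   Context: An $n$-variable Boolean function is a map $\mathbb{F}_2^n\to\mathbb{F}_2$, with algebraic degree $\deg$ the degree of its algebraic normal form. ${AN}^c(f)$ is the set of $n$-variable Boolean functions $g$ with $f\cdot g\neq 0$ (pointwise product). The fast algebraic immunity ${FAI}(f)$ is the minimum of $\deg(g)+\deg(f\cdot g)$ over $g\in{AN}^c(f)$, $g\neq 1$. *)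

(* Defs.v *)
From mathcomp Require Import all_boot.
Set Implicit Arguments. Unset Strict Implicit. Unset Printing Implicit Defensive.

Definition point (n : nat) := {ffun 'I_n -> bool}.
Definition boolfun (n : nat) := {ffun point n -> bool}.

(* Evaluation of the polynomial with coefficient vector a (a u = coefficient
   of the monomial prod_{i in u} x_i) at x, over F_2 (xor = addition). *)
Definition anf_eval n (a : {ffun {set 'I_n} -> bool}) (x : point n) : bool :=
  \big[addb/false]_(u : {set 'I_n}) (a u && [forall i in u, x i]).

Definition deg_le n (f : boolfun n) (d : nat) : bool :=
  [exists a : {ffun {set 'I_n} -> bool},
     [forall x, anf_eval a x == f x] && [forall u, a u ==> (#|u| <= d)]].

(* Algebraic degree: degree of the (unique) ANF, i.e. least d with deg_le f d
   (every f has an ANF of degree <= n). *)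
Definition bdeg n (f : boolfun n) : nat :=
  \big[minn/n]_(d < n.+1 | deg_le f d) d.

Definition bmul n (f g : boolfun n) : boolfun n := [ffun x => f x && g x].
Definition bzero n : boolfun n := [ffun => false].
Definition bone n : boolfun n := [ffun => true].

Definition ANc n (f g : boolfun n) : bool := bmul f g != bzero n.

(* The default value 2n+1 (larger than any candidate) is only used when the
   set is empty, which never happens under the hypotheses of the theorem. *)
Definition FAI n (f : boolfun n) : nat :=
  \big[minn/(2 * n).+1]_(g : boolfun n | ANc f g && (g != bone n))
     (bdeg g + bdeg (bmul f g)).

(* Main.v *)
Require Import Defs.
From mathcomp Require Import all_boot.
From mathcomp Require Import zify.

Theorem proposition4 (n : nat) (f g : boolfun n) :
  0 < n ->
  ANc f g -> g != bone n ->
  bdeg g + bdeg (bmul f g) = FAI f ->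
  bdeg g <= (FAI f) ./2 /\ bdeg (bmul f g) >= uphalf (FAI f).
Proof.
move=> _ Hg Hg1 HF.
set h := bmul f g.
have Hfh : bmul f h = h.
  by apply/ffunP => x; rewrite /h !ffunE andbA andbb.
have Hh1 : h != bone n.
  apply: contra Hg1 => /eqP Hh; apply/eqP/ffunP => x.
  move/ffunP: Hh => /(_ x); rewrite /h /bone !ffunE.
  by case: (g x); rewrite ?andbF.
have Hhc : ANc f h by rewrite /ANc Hfh.
have Hle : FAI f <= bdeg h + bdeg (bmul f h).
  have Hp : ANc f h && (h != bone n) by rewrite Hhc Hh1.
  rewrite /FAI; have : h \in index_enum (boolfun n) by rewrite mem_index_enum.
  elim: (index_enum _) => [|x s IH] //; rewrite in_cons big_cons.
  case/orP => [/eqP<-|Hs]; first by rewrite Hp geq_minl.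
  case: ifP => _; last exact: IH.
  exact: leq_trans (geq_minr _ _) (IH Hs).
rewrite Hfh in Hle.
have := odd_double_half (FAI f); have := uphalf_half (FAI f).
rewrite -/h in HF *.
move: Hle HF; set a := bdeg g; set b := bdeg h; set F := FAI f.
move=> *; split; lia.
Qed.
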